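(* Let $m\in\mathbb{N}_+$, $\alpha=(\alpha_1,\dots,\alpha_m)\in(0,1)^m$ and $0<K<\infty$. Let $q\in\mathbb{N}_+$ and $l\in[1,\infty)$ with $q\le l$, and suppose there are $(p_1,\dots,p_m)\in\{1,\dots,q-1\}^m$ such that $|q\alpha_i-p_i|<K/l$ for all $i$, and $\mathbb{Z}/q\mathbb{Z}$ admits an isomorphism $\mathbb{Z}/q\mathbb{Z}\cong\bigoplus_{i=1}^m\mathbb{Z}/l_i\mathbb{Z}$ under which the image of $p_i$ is a generator of the summand $\mathbb{Z}/l_i\mathbb{Z}$, for each $i$. Then, for the action $\mathbb{Z}^m\curvearrowright_\alpha\mathbb{T}^1$, the level $(ql\,\mathbb{T}^1,d_{\mathbb{Z}^m})$ of the warped cone is quasi-isometric to $(\mathbb{T}^1,ld)\times\prod_{i=1}^m(\mathbb{T}^1,l_id)$ (with the $\ell_1$-product metric), with quasi-isometry constants depending only on $m$ and $K$.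
   Context: $\mathbb{T}^1=\mathbb{R}/\mathbb{Z}$ with standard metric $d$ of circumference $1$; $(\mathbb{T}^1,cd)$ is this circle with metric scaled by $c$. The action $\mathbb{Z}^m\curvearrowright_\alpha\mathbb{T}^1$ is $(n_1,\dots,n_m).z=z+\sum_in_i\alpha_i$, with generating set $\{\pm e_1,\dots,\pm e_m\}$ of $\mathbb{Z}^m$. For $t>0$, $d_{\mathbb{Z}^m}$ on $t\mathbb{T}^1$ is the largest metric with $d_{\mathbb{Z}^m}(z,z')\le td(z,z')$ and $d_{\mathbb{Z}^m}(z,z\pm\alpha_j)\le1$ for all $j$. A $(C,A)$-quasi-isometry $f:X\to Y$ satisfies $C^{-1}d(x,x')-A\le d(f(x),f(x'))\le Cd(x,x')+A$ and the $A$-neighbourhood of $f(X)$ is $Y$. *)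

(* Defs.v *)
From Stdlib Require Import Reals ZArith.
From Coquelicot Require Import Coquelicot.
From mathcomp Require Import ssreflect ssrbool ssrnat fintype bigop.

Open Scope R_scope.

(* The circle T^1 = R/Z, represented by the representatives in [0,1). *)
Definition circle := { x : R | 0 <= x < 1 }.

Definition cdist (z z' : circle) : R :=
  Rmin (Rabs (proj1_sig z - proj1_sig z')) (1 - Rabs (proj1_sig z - proj1_sig z')).

Lemma frac_part_in01 (r : R) : 0 <= frac_part r < 1.
Proof. destruct (base_fp r) as [H1 H2]; split; [apply Rge_le|]; assumption. Qed.

Definition cadd (z : circle) (a : R) : circle :=
  exist _ (frac_part (proj1_sig z + a)) (frac_part_in01 _).

Definition is_metric (delta : circle -> circle -> R) : Prop :=
  (forall z z', 0 <= delta z z') /\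
  (forall z z', delta z z' = 0 <-> z = z') /\
  (forall z z', delta z z' = delta z' z) /\
  (forall z z' z'', delta z z'' <= delta z z' + delta z' z'').

(* delta is admissible for the warped metric d_{Z^m} on t T^1 for the
   action Z^m acting via alpha, generating set {+-e_1,...,+-e_m}. *)
Definition warp_admissible (m : nat) (alpha : 'I_m -> R) (t : R)
    (delta : circle -> circle -> R) : Prop :=
  is_metric delta /\
  (forall z z', delta z z' <= t * cdist z z') /\
  (forall z (j : 'I_m), delta z (cadd z (alpha j)) <= 1 /\
                        delta z (cadd z (- alpha j)) <= 1).

(* The warped metric d_{Z^m} on t T^1: the largest admissible metric,
   i.e. the pointwise supremum of all admissible metrics. *)
Definition warped_dist (m : nat) (alpha : 'I_m -> R) (t : R)
    (z z' : circle) : R :=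
  real (Lub_Rbar (fun r => exists delta,
          warp_admissible m alpha t delta /\ r = delta z z')).

Definition prod_dist (m : nat) (l : R) (li : 'I_m -> nat)
    (x y : circle * ('I_m -> circle)) : R :=
  l * cdist (fst x) (fst y) +
  \big[Rplus/0]_(i < m) (INR (li i) * cdist (snd x i) (snd y i)).

Definition quasi_isometry {X Y : Type} (dX : X -> X -> R) (dY : Y -> Y -> R)
    (C A : R) (f : X -> Y) : Prop :=
  (forall x x', / C * dX x x' - A <= dY (f x) (f x') /\
                dY (f x) (f x') <= C * dX x x' + A) /\
  (forall y, exists x, dY (f x) y <= A).

Definition zcong (n a b : Z) : Prop := Z.modulo a n = Z.modulo b n.

(* Elements are represented by integer representatives; phi is given on
   representatives and required to be well defined, additive, injective
   and surjective modulo the relevant moduli. *)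
Definition cyclic_decomp (m q : nat) (li : 'I_m -> nat) (p : 'I_m -> nat)
  : Prop :=
  exists phi : Z -> 'I_m -> Z,
    (forall a b, zcong (Z.of_nat q) a b ->
       forall i, zcong (Z.of_nat (li i)) (phi a i) (phi b i)) /\
    (forall a b i, zcong (Z.of_nat (li i)) (phi (a + b)%Z i)
                         (phi a i + phi b i)%Z) /\
    (forall a b, (forall i, zcong (Z.of_nat (li i)) (phi a i) (phi b i)) ->
       zcong (Z.of_nat q) a b) /\
    (forall v : 'I_m -> Z, exists a,
       forall i, zcong (Z.of_nat (li i)) (phi a i) (v i)) /\
    (forall i,
       (forall j, j <> i ->
          zcong (Z.of_nat (li j)) (phi (Z.of_nat (p i)) j) 0%Z) /\
       (forall v : Z, exists k : Z,
          zcong (Z.of_nat (li i)) (k * phi (Z.of_nat (p i)) i)%Z v)).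

(* Main.v *)
Require Import Defs.
From Stdlib Require Import Reals ZArith.
From Coquelicot Require Import Coquelicot.
From mathcomp Require Import ssreflect ssrbool ssrnat fintype bigop.
From Stdlib Require Import Lia Lra ProofIrrelevance IndefiniteDescription.
From mathcomp Require Import ssrfun eqtype seq.
Open Scope R_scope.

Definition near (r : R) : Z :=
  if Rle_dec (frac_part r) (/2) then Int_part r else (Int_part r + 1)%Z.
Definition dZ (r : R) : R := Rabs (r - IZR (near r)).

Lemma frac_eq r : frac_part r = r - IZR (Int_part r).
Proof. reflexivity. Qed.

Lemma dZ_min r n : dZ r <= Rabs (r - IZR n).
Proof.
  have [H1 H2] := frac_part_in01 r. rewrite /dZ /near.
  rewrite frac_eq in H1 H2 *. set k := Int_part r in H1 H2 *.
  have Hd : (k - n >= 1 \/ k - n = 0 \/ k - n <= -1)%Z by lia.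
  have E : r - IZR n = (r - IZR k) + IZR (k - n) by rewrite minus_IZR; ring.
  destruct (Rle_dec (r - IZR k) (/2)) as [Hh|Hh]; rewrite /=.
  - case: Hd => [Hd|[Hd|Hd]].
    + apply IZR_ge in Hd. rewrite E !Rabs_right; lra.
    + rewrite E Hd Rplus_0_r. lra.
    + apply IZR_le in Hd. rewrite E Rabs_right; [|lra]. rewrite Rabs_left; lra.
  - rewrite plus_IZR.
    case: Hd => [Hd|[Hd|Hd]].
    + apply IZR_ge in Hd. rewrite E Rabs_left; [|lra]. rewrite Rabs_right; lra.
    + rewrite E Hd Rplus_0_r. rewrite Rabs_left; [|lra]. rewrite Rabs_right; lra.
    + apply IZR_le in Hd. rewrite E Rabs_left; [|lra]. rewrite Rabs_left; lra.
Qed.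

Lemma dZ_ge0 r : 0 <= dZ r.
Proof. apply Rabs_pos. Qed.

Lemma dZ_half r : dZ r <= /2.
Proof.
  have [H1 H2] := frac_part_in01 r. rewrite /dZ /near.
  rewrite frac_eq in H1 H2 *.
  destruct (Rle_dec (r - IZR (Int_part r)) (/2)) as [Hh|Hh]; rewrite /=.
  - rewrite Rabs_right; lra.
  - rewrite plus_IZR Rabs_left; lra.
Qed.

Lemma dZ_abs r : dZ r <= Rabs r.
Proof. have := dZ_min r 0. by rewrite Rminus_0_r. Qed.

Lemma dZ_shift r n : dZ (r + IZR n) = dZ r.
Proof.
  apply Rle_antisym.
  - have := dZ_min (r + IZR n) (near r + n). rewrite plus_IZR.
    have -> : r + IZR n - (IZR (near r) + IZR n) = r - IZR (near r) by ring. done.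
  - have := dZ_min r (near (r + IZR n) - n). rewrite minus_IZR.
    have -> : r - (IZR (near (r + IZR n)) - IZR n) = r + IZR n - IZR (near (r + IZR n)) by ring. done.
Qed.

Lemma dZ_opp r : dZ (- r) = dZ r.
Proof.
  have A : forall s, dZ (- s) <= dZ s.
    move=> s. have := dZ_min (- s) (- near s). rewrite opp_IZR.
    have -> : - s - - IZR (near s) = - (s - IZR (near s)) by ring.
    by rewrite Rabs_Ropp.
  apply Rle_antisym; first by apply A.
  have := A (- r). by rewrite Ropp_involutive.
Qed.

Lemma dZ_add r s : dZ (r + s) <= dZ r + dZ s.
Proof.
  apply Rle_trans with (Rabs (r + s - IZR (near r + near s))); first by apply dZ_min.
  rewrite plus_IZR.
  have -> : r + s - (IZR (near r) + IZR (near s)) = (r - IZR (near r)) + (s - IZR (near s)) by ring.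
  apply Rabs_triang.
Qed.

Lemma dZ_int n : dZ (IZR n) = 0.
Proof.
  apply Rle_antisym; last by apply dZ_ge0.
  have := dZ_min (IZR n) n. by rewrite Rminus_eq_0 Rabs_R0.
Qed.

Lemma dZ_sub_int r n : dZ (r - IZR n) = dZ r.
Proof. by rewrite /Rminus -opp_IZR dZ_shift. Qed.

Definition toC (r : R) : circle := exist _ (frac_part r) (frac_part_in01 r).
Definition cv (z : circle) : R := proj1_sig z.

Lemma toC_val r : exists k, cv (toC r) = r + IZR k.
Proof. exists (- Int_part r)%Z. rewrite /cv /= frac_eq opp_IZR. ring. Qed.

Lemma circle_eq (z z' : circle) : cv z = cv z' -> z = z'.
Proof.
  case: z => x hx; case: z' => x' hx' /= E. rewrite /cv /= in E. subst x'.
  f_equal. apply proof_irrelevance.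
Qed.

Lemma int_small n : -1 < IZR n < 1 -> n = 0%Z.
Proof.
  move=> [H1 H2]. apply lt_IZR in H2. have H3 : (-1 < n)%Z.
  { apply lt_IZR. lra. }
  lia.
Qed.

Lemma val_in z : 0 <= cv z < 1.
Proof. case: z => x hx. by rewrite /cv. Qed.

Lemma circle_int (z z' : circle) n : cv z = cv z' + IZR n -> z = z'.
Proof.
  move=> E. have h1 := val_in z. have h2 := val_in z'.
  have Hn : n = 0%Z by apply int_small; lra.
  subst n.
  move: E; rewrite Rplus_0_r. apply circle_eq.
Qed.

Lemma toC_eq r r' n : r = r' + IZR n -> toC r = toC r'.
Proof.
  move=> E. have [k1 E1] := toC_val r. have [k2 E2] := toC_val r'.
  apply circle_int with (k1 + n - k2)%Z. rewrite E1 E2 E minus_IZR plus_IZR. ring.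
Qed.

Lemma toC_id z : toC (cv z) = z.
Proof.
  have [k E] := toC_val (cv z). by apply circle_int with k.
Qed.

Lemma cdist_dZ z z' : cdist z z' = dZ (cv z - cv z').
Proof.
  have h1 := val_in z. have h2 := val_in z'. rewrite /cdist -/(cv z) -/(cv z').
  set D := cv z - cv z'. have HD : Rabs D < 1.
  { rewrite /D. apply Rabs_def1; lra. }
  have HA := Rabs_pos D. have HD2 := Rabs_def2 _ _ HD.
  apply Rle_antisym.
  - rewrite /dZ. set n := near D.
    have [Hn|Hn] : n = 0%Z \/ (n >= 1 \/ n <= -1)%Z by lia.
    + rewrite Hn Rminus_0_r. apply Rmin_l.
    + apply Rle_trans with (1 - Rabs D); first by apply Rmin_r.
      have : 1 <= Rabs (IZR n).
      { case: Hn => Hn.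
        - apply IZR_ge in Hn. rewrite Rabs_right; lra.
        - apply IZR_le in Hn. rewrite Rabs_left; lra. }
      have := Rabs_triang_inv (IZR n) D. rewrite Rabs_minus_sym.
      move=> ? ?. lra.
  - apply Rmin_glb; first by apply dZ_abs.
    destruct (Rle_dec 0 D) as [H|H].
    + move: (dZ_min D 1) => h. rewrite Rabs_left1 in h; [|lra]. rewrite Rabs_right; lra.
    + move: (dZ_min D (-1)) => h. rewrite Rabs_right in h; [|lra]. rewrite Rabs_left; lra.
Qed.

Lemma cdist_toC a b : cdist (toC a) (toC b) = dZ (a - b).
Proof.
  rewrite cdist_dZ. have [k1 E1] := toC_val a. have [k2 E2] := toC_val b.
  rewrite E1 E2. have -> : a + IZR k1 - (b + IZR k2) = (a - b) + IZR (k1 - k2) by rewrite minus_IZR; ring.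
  apply dZ_shift.
Qed.

Section Sums.
End Sums.

Lemma sumR_le (I : Type) (s : seq I) (F G : I -> R) :
  (forall i, F i <= G i) ->
  \big[Rplus/0]_(i <- s) F i <= \big[Rplus/0]_(i <- s) G i.
Proof.
  move=> H. elim: s => [|a s IH]; first by rewrite !big_nil; lra.
  rewrite !big_cons. apply Rplus_le_compat; auto.
Qed.

Lemma sumR_plus (I : Type) (s : seq I) (F G : I -> R) :
  \big[Rplus/0]_(i <- s) (F i + G i) =
  \big[Rplus/0]_(i <- s) F i + \big[Rplus/0]_(i <- s) G i.
Proof.
  elim: s => [|a s IH]; first by rewrite !big_nil; lra.
  rewrite !big_cons IH. ring.
Qed.

Lemma sumR_scal (I : Type) (s : seq I) c (F : I -> R) :
  \big[Rplus/0]_(i <- s) (c * F i) = c * \big[Rplus/0]_(i <- s) F i.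
Proof.
  elim: s => [|a s IH]; first by rewrite !big_nil; lra.
  rewrite !big_cons IH. ring.
Qed.

Lemma sumR_ge0 (I : Type) (s : seq I) (F : I -> R) :
  (forall i, 0 <= F i) -> 0 <= \big[Rplus/0]_(i <- s) F i.
Proof.
  move=> H. elim: s => [|a s IH]; first by rewrite !big_nil; lra.
  rewrite !big_cons. have := H a. lra.
Qed.

Lemma sumR_abs (I : Type) (s : seq I) (F : I -> R) :
  Rabs (\big[Rplus/0]_(i <- s) F i) <= \big[Rplus/0]_(i <- s) Rabs (F i).
Proof.
  elim: s => [|a s IH]; first by rewrite !big_nil Rabs_R0; lra.
  rewrite !big_cons. apply Rle_trans with (Rabs (F a) + Rabs (\big[Rplus/0]_(i <- s) F i)).
  apply Rabs_triang. lra.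
Qed.


Lemma IZR_sum (I : Type) (s : seq I) (F : I -> Z) :
  IZR (\big[Z.add/0%Z]_(i <- s) F i) = \big[Rplus/0]_(i <- s) IZR (F i).
Proof.
  elim: s => [|a s IH]; first by rewrite !big_nil.
  by rewrite !big_cons plus_IZR IH.
Qed.

Lemma sumZ_mull (I : Type) (s : seq I) c (F : I -> Z) :
  (c * \big[Z.add/0%Z]_(i <- s) F i)%Z = \big[Z.add/0%Z]_(i <- s) (c * F i)%Z.
Proof.
  elim: s => [|a s IH]; first by rewrite !big_nil; lia.
  rewrite !big_cons -IH. ring.
Qed.

Lemma phi_sum (I : Type) (s : seq I) (L : Z) (g : Z -> Z) (F : I -> Z) :
  (forall a b, (L | g (a + b) - (g a + g b)))%Z -> (L | g 0)%Z ->
  (L | g (\big[Z.add/0%Z]_(i <- s) F i) - \big[Z.add/0%Z]_(i <- s) g (F i))%Z.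
Proof.
  move=> Ha H0. elim: s => [|a s IH].
  - rewrite !big_nil. by rewrite Z.sub_0_r.
  - rewrite !big_cons. have [k1 E1] := Ha (F a) (\big[Z.add/0%Z]_(i <- s) F i).
    case: IH => k2 E2. exists (k1 + k2)%Z. lia.
Qed.

Lemma sumZ_delta (I : eqType) (s : seq I) (L : Z) (X : I -> Z) (i : I) :
  uniq s -> (forall j, j <> i -> (L | X j))%Z ->
  (L | \big[Z.add/0%Z]_(j <- s) X j - (if i \in s then X i else 0))%Z.
Proof.
  move=> Hu H. elim: s Hu => [|a s IH] Hu.
  - rewrite big_nil /=. exists 0%Z. lia.
  - rewrite big_cons in_cons. move: Hu => /= /andP [Ha Hu]. have [k E] := IH Hu.
    case: (eqVneq i a) => [Eia|Nia] /=.
    + subst a. rewrite (negbTE Ha) in E. exists k. lia.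
    + have [k' E'] : (L | X a)%Z. { apply H. move=> E0. subst a. by rewrite eqxx in Nia. }
      exists (k + k')%Z. case: (i \in s) E => E; lia.
Qed.

Lemma lub_between (E : R -> Prop) v U :
  E v -> (forall r, E r -> r <= U) ->
  v <= real (Lub_Rbar E) /\ real (Lub_Rbar E) <= U.
Proof.
  move=> Hv HU. have [Hub Hlub] := Lub_Rbar_correct E.
  have H1 := Hub v Hv. have H2 : Rbar_le (Lub_Rbar E) U.
  { apply Hlub. move=> x Hx. apply HU, Hx. }
  move: H1 H2. case: (Lub_Rbar E) => [L| |] //=.
Qed.

Lemma warped_bounds m (alpha : 'I_m -> R) t z z' (d0 : circle -> circle -> R) U :
  warp_admissible m alpha t d0 ->
  (forall d, warp_admissible m alpha t d -> d z z' <= U) ->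
  d0 z z' <= warped_dist m alpha t z z' <= U.
Proof.
  move=> H0 HU. rewrite /warped_dist. apply lub_between.
  - exists d0. by split.
  - move=> r [d [Hd ->]]. by apply HU.
Qed.

Lemma jump_nat m (alpha : 'I_m -> R) t d (Hd : warp_admissible m alpha t d) (a : R) :
  (forall w, d w (cadd w a) <= 1) ->
  forall (k : nat) z, d z (toC (cv z + INR k * a)) <= INR k.
Proof.
  case: Hd => [[H0 [Hdef [Hsym Htri]]] _] Ha. elim => [|k IH] z.
  - have -> : toC (cv z + INR 0 * a) = z.
    { transitivity (toC (cv z)); last by apply toC_id. apply toC_eq with 0%Z. simpl. ring. }
    have -> : d z z = 0 by apply Hdef. simpl; lra.
  - set y := toC (cv z + INR k * a).
    apply Rle_trans with (d z y + d y (cadd y a)); last first.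
    { move: (IH z) (Ha y) => h1 h2. rewrite S_INR. rewrite -/y in h1. lra. }
    have -> : toC (cv z + INR k.+1 * a) = cadd y a.
    { rewrite /cadd. have [n E] := toC_val (cv z + INR k * a).
      apply toC_eq with (- n)%Z. rewrite -/(cv y) E S_INR opp_IZR. ring. }
    apply Htri.
Qed.

Lemma jump_int m (alpha : 'I_m -> R) t d (Hd : warp_admissible m alpha t d) (a : R) :
  (forall w, d w (cadd w a) <= 1 /\ d w (cadd w (- a)) <= 1) ->
  forall (n : Z) z, d z (toC (cv z + IZR n * a)) <= Rabs (IZR n).
Proof.
  move=> Ha n z. have [Hn|Hn] : (0 <= n \/ n < 0)%Z by lia.
  - have E : n = Z.of_nat (Z.to_nat n) by lia.
    rewrite E -INR_IZR_INZ Rabs_right; last by apply Rle_ge, pos_INR.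
    apply (jump_nat _ _ _ _ Hd). move=> w. apply Ha.
  - have E : n = (- Z.of_nat (Z.to_nat (- n)))%Z by lia.
    rewrite E opp_IZR -INR_IZR_INZ Rabs_Ropp Rabs_right; last by apply Rle_ge, pos_INR.
    have -> : - INR (Z.to_nat (- n)) * a = INR (Z.to_nat (- n)) * (- a) by ring.
    apply (jump_nat _ _ _ _ Hd). move=> w. apply Ha.
Qed.

Lemma chain m (alpha : 'I_m -> R) t d (Hd : warp_admissible m alpha t d) (n : 'I_m -> Z) :
  forall (s : seq 'I_m) z z',
  d z z' <= \big[Rplus/0]_(j <- s) Rabs (IZR (n j)) +
            t * dZ (cv z' - cv z - \big[Rplus/0]_(j <- s) (IZR (n j) * alpha j)).
Proof.
  have Hd' := Hd. case: Hd' => [[H0 [Hdef [Hsym Htri]]] [Ht Hj]].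
  elim => [|j s IH] z z'.
  - rewrite !big_nil Rminus_0_r Rplus_0_l. have := Ht z z'.
    rewrite cdist_dZ -dZ_opp. have -> : - (cv z - cv z') = cv z' - cv z by ring. done.
  - set y := toC (cv z + IZR (n j) * alpha j).
    apply Rle_trans with (d z y + d y z'); first by apply Htri.
    have H1 : d z y <= Rabs (IZR (n j)) by apply (jump_int _ _ _ _ Hd).
    have H2 := IH y z'. have [k E] := toC_val (cv z + IZR (n j) * alpha j).
    rewrite -/(cv y) in E. rewrite E in H2.
    have E2 : cv z' - (cv z + IZR (n j) * alpha j + IZR k) -
              \big[Rplus/0]_(j0 <- s) (IZR (n j0) * alpha j0) =
              (cv z' - cv z - (IZR (n j) * alpha j +
              \big[Rplus/0]_(j0 <- s) (IZR (n j0) * alpha j0))) - IZR k by ring.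
    rewrite E2 dZ_sub_int in H2. rewrite !big_cons. lra.
Qed.

Lemma sumO_plus m (F G : 'I_m -> R) :
  \big[Rplus/0]_(i < m) (F i + G i) =
  \big[Rplus/0]_(i < m) F i + \big[Rplus/0]_(i < m) G i.
Proof. exact: sumR_plus. Qed.

Lemma sumO_scal m c (F : 'I_m -> R) :
  \big[Rplus/0]_(i < m) (c * F i) = c * \big[Rplus/0]_(i < m) F i.
Proof. exact: sumR_scal. Qed.

Definition Pf m (q : nat) (l : R) (li : 'I_m -> nat) (w : 'I_m -> Z) (D : R) : R :=
  l * dZ (INR q * D) +
  \big[Rplus/0]_(i < m) (INR (li i) * dZ (INR q * IZR (w i) * D / INR (li i))).

Definition Mr m : R := \big[Rplus/0]_(i < m) 1.

Lemma Mr_ge0 m : 0 <= Mr m.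
Proof. apply sumR_ge0 => i; lra. Qed.

Lemma Pf_ge0 m q l li w D : 0 <= l -> 0 <= Pf m q l li w D.
Proof.
  move=> Hl. rewrite /Pf. have := dZ_ge0 (INR q * D).
  have : 0 <= \big[Rplus/0]_(i < m) (INR (li i) * dZ (INR q * IZR (w i) * D / INR (li i))).
  { apply sumR_ge0 => i. apply Rmult_le_pos; [apply pos_INR|apply dZ_ge0]. }
  move=> h1 h2. have := Rmult_le_pos _ _ Hl h2. lra.
Qed.

Lemma Pf_opp m q l li w D : Pf m q l li w (- D) = Pf m q l li w D.
Proof.
  rewrite /Pf. have -> : INR q * - D = - (INR q * D) by ring. rewrite dZ_opp. f_equal.
  apply eq_bigr => i _. f_equal. rewrite -dZ_opp. f_equal. rewrite /Rdiv. ring.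
Qed.

Lemma Pf_add m q l li w D1 D2 : 0 <= l ->
  Pf m q l li w (D1 + D2) <= Pf m q l li w D1 + Pf m q l li w D2.
Proof.
  move=> Hl. rewrite /Pf.
  have h0 : l * dZ (INR q * (D1 + D2)) <= l * dZ (INR q * D1) + l * dZ (INR q * D2).
  { rewrite -Rmult_plus_distr_l. apply Rmult_le_compat_l => //.
    rewrite Rmult_plus_distr_l. apply dZ_add. }
  have h1 : \big[Rplus/0]_(i < m) (INR (li i) * dZ (INR q * IZR (w i) * (D1 + D2) / INR (li i)))
     <= \big[Rplus/0]_(i < m) (INR (li i) * dZ (INR q * IZR (w i) * D1 / INR (li i)) +
                              INR (li i) * dZ (INR q * IZR (w i) * D2 / INR (li i))).
  { apply sumR_le => i. rewrite -Rmult_plus_distr_l. apply Rmult_le_compat_l; first by apply pos_INR.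
    have -> : INR q * IZR (w i) * (D1 + D2) / INR (li i) =
              INR q * IZR (w i) * D1 / INR (li i) + INR q * IZR (w i) * D2 / INR (li i).
    { rewrite /Rdiv. ring. }
    apply dZ_add. }
  rewrite sumO_plus in h1. cbv beta in h1. lra.
Qed.

Lemma Pf_shift m q l li w D N :
  (forall i, exists k, INR q * IZR (w i) / INR (li i) = IZR k) ->
  Pf m q l li w (D + IZR N) = Pf m q l li w D.
Proof.
  move=> Hdiv. rewrite /Pf.
  have -> : INR q * (D + IZR N) = INR q * D + IZR (Z.of_nat q * N).
  { rewrite mult_IZR -INR_IZR_INZ. ring. }
  rewrite dZ_shift. f_equal. apply eq_bigr => i _. f_equal.
  have [k Ek] := Hdiv i.
  have -> : INR q * IZR (w i) * (D + IZR N) / INR (li i) =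
            INR q * IZR (w i) * D / INR (li i) + (INR q * IZR (w i) / INR (li i)) * IZR N.
  { rewrite /Rdiv. ring. }
  by rewrite Ek -mult_IZR dZ_shift.
Qed.

Lemma L_dZ L y : 0 < L -> L * dZ (y / L) <= Rabs y.
Proof.
  move=> HL. apply Rle_trans with (L * Rabs (y / L)).
  { apply Rmult_le_compat_l; [lra|apply dZ_abs]. }
  rewrite Rabs_div; last lra. rewrite (Rabs_right L); last lra.
  right. field. lra.
Qed.

Lemma Pf_lip m q l li w D :
  (forall i, (0 < li i)%nat) ->
  (forall i, 0 <= IZR (w i) <= INR (li i)) ->
  (forall i, INR (li i) <= INR q) -> INR q <= l ->
  Pf m q l li w D <= (Mr m + 1) * (INR q * l) * Rabs D.
Proof.
  move=> Hli Hw Hlq Hql. have Hq := pos_INR q. have HD := Rabs_pos D.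
  rewrite /Pf.
  have h0 : l * dZ (INR q * D) <= INR q * l * Rabs D.
  { apply Rle_trans with (l * Rabs (INR q * D)).
    - apply Rmult_le_compat_l; [lra|apply dZ_abs].
    - rewrite Rabs_mult (Rabs_right (INR q)); [right; ring|lra]. }
  have h1 : \big[Rplus/0]_(i < m) (INR (li i) * dZ (INR q * IZR (w i) * D / INR (li i)))
            <= \big[Rplus/0]_(i < m) (INR q * l * Rabs D * 1).
  { apply sumR_le => i. have Hl0 : 0 < INR (li i) by apply lt_0_INR; apply/ltP.
    apply Rle_trans with (Rabs (INR q * IZR (w i) * D)); first by apply L_dZ.
    rewrite !Rabs_mult (Rabs_right (INR q)); last lra.
    rewrite (Rabs_right (IZR (w i))); last by have := Hw i; lra.
    have := Hw i. have := Hlq i. move=> h2 h3.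
    have : IZR (w i) <= l by lra.
    move=> h4. rewrite Rmult_1_r. apply Rmult_le_compat_r => //.
    apply Rmult_le_compat_l => //. }
  rewrite sumO_scal /Mr in h1 *. have := Mr_ge0 m. rewrite /Mr. move=> hM. nra.
Qed.

Lemma Pf_lipdZ m q l li w D :
  (forall i, (0 < li i)%nat) ->
  (forall i, 0 <= IZR (w i) <= INR (li i)) ->
  (forall i, INR (li i) <= INR q) -> INR q <= l ->
  (forall i, exists k, INR q * IZR (w i) / INR (li i) = IZR k) ->
  Pf m q l li w D <= (Mr m + 1) * (INR q * l) * dZ D.
Proof.
  move=> Hli Hw Hlq Hql Hdiv.
  rewrite -(Pf_shift _ _ _ _ _ D (- near D) Hdiv).
  rewrite /dZ. have -> : D - IZR (near D) = D + IZR (- near D) by rewrite opp_IZR; ring.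
  by apply Pf_lip.
Qed.

Lemma Pf_jump m q l li w (a : R) (p : nat) K :
  (forall i, (0 < li i)%nat) ->
  (forall i, 0 <= IZR (w i) <= INR (li i)) ->
  (forall i, INR (li i) <= INR q) -> INR q <= l -> 0 < l -> 0 < K ->
  Rabs (INR q * a - INR p) < K / l ->
  (forall i, exists k d, 0 <= IZR d <= 1 /\
        INR p * IZR (w i) = IZR d + IZR k * INR (li i)) ->
  Pf m q l li w a <= (Mr m + 1) * (1 + K).
Proof.
  move=> Hli Hw Hlq Hql Hl HK He Hpw. rewrite /Pf.
  set e := INR q * a - INR p. rewrite -/e in He.
  have HKl : 0 < K / l by apply Rdiv_lt_0_compat.
  have h0 : l * dZ (INR q * a) <= K.
  { apply Rle_trans with (l * Rabs e).
    { apply Rmult_le_compat_l; [lra|]. rewrite -(dZ_sub_int _ (Z.of_nat p)) -INR_IZR_INZ.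
      apply dZ_abs. }
    apply Rle_trans with (l * (K / l)); first by apply Rmult_le_compat_l; lra.
    right. field. lra. }
  have h1 : \big[Rplus/0]_(i < m) (INR (li i) * dZ (INR q * IZR (w i) * a / INR (li i)))
            <= \big[Rplus/0]_(i < m) ((1 + K) * 1).
  { apply sumR_le => i. have Hl0 : 0 < INR (li i) by apply lt_0_INR; apply/ltP.
    have [k [d [Hd E]]] := Hpw i.
    have -> : INR q * IZR (w i) * a / INR (li i) =
              (IZR d + IZR (w i) * e) / INR (li i) + IZR k.
    { have E2 : INR q * IZR (w i) * a = IZR d + IZR k * INR (li i) + IZR (w i) * e by rewrite /e -E; ring.
      rewrite E2. field. lra. }
    rewrite dZ_shift.
    apply Rle_trans with (Rabs (IZR d + IZR (w i) * e)); first by apply L_dZ.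
    apply Rle_trans with (Rabs (IZR d) + Rabs (IZR (w i) * e)); first by apply Rabs_triang.
    rewrite Rabs_mult (Rabs_right (IZR d)); last lra.
    rewrite (Rabs_right (IZR (w i))); last by have := Hw i; lra.
    have h2 : IZR (w i) * Rabs e <= INR (li i) * (K / l).
    { apply Rmult_le_compat; [by have := Hw i; lra|apply Rabs_pos|by have := Hw i; lra|lra]. }
    have h3 : INR (li i) * (K / l) <= l * (K / l).
    { apply Rmult_le_compat_r; [lra|]. have := Hlq i. lra. }
    have h4 : l * (K / l) = K by field; lra.
    lra. }
  rewrite sumO_scal in h1. have := Mr_ge0 m. rewrite /Mr. move=> hM. nra.
Qed.

Module ZPart.
Local Open Scope Z_scope.


Lemma zcong_div n a b : 0 < n -> (zcong n a b <-> (n | a - b)).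
Proof.
  move=> Hn. rewrite /zcong. split.
  - move=> E. exists (a / n - b / n).
    have := Z.div_mod a n. have := Z.div_mod b n. lia.
  - move=> [k E]. have -> : a = b + k * n by lia. by rewrite Z_mod_plus_full.
Qed.

Lemma dv_trans L a b c : (L | a - b) -> (L | b - c) -> (L | a - c).
Proof. move=> [k1 E1] [k2 E2]. exists (k1 + k2). lia. Qed.

Lemma dv_sym L a b : (L | a - b) -> (L | b - a).
Proof. move=> [k E]. exists (- k). lia. Qed.

Lemma dv_mulr L a b x : (L | a - b) -> (L | a * x - b * x).
Proof. move=> [k E]. exists (k * x). rewrite -Z.mul_sub_distr_r E. ring. Qed.

Lemma dv_mull L a b x : (L | a - b) -> (L | x * a - x * b).
Proof. move=> [k E]. exists (k * x). rewrite -Z.mul_sub_distr_l E. ring. Qed.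

Lemma dv_add L a b c d : (L | a - b) -> (L | c - d) -> (L | (a + c) - (b + d)).
Proof. move=> [k1 E1] [k2 E2]. exists (k1 + k2). lia. Qed.

Lemma dv_refl L a : (L | a - a).
Proof. exists 0. lia. Qed.

Arguments dv_trans {L a b c}.
Arguments dv_sym {L a b}.
Arguments dv_mulr {L a b} x.
Arguments dv_mull {L a b} x.

Lemma dv_0 L a : (L | a) <-> (L | a - 0).
Proof. by rewrite Z.sub_0_r. Qed.

Lemma decomp_w m q (li : 'I_m -> nat) (p : 'I_m -> nat) :
  (1 <= q)%nat -> (forall i, (0 < li i)%nat) -> cyclic_decomp m q li p ->
  exists w : 'I_m -> Z,
    (forall i, 0 <= w i < Z.of_nat (li i)) /\
    (forall i, (Z.of_nat (li i) | Z.of_nat q * w i)) /\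
    (forall i j, (Z.of_nat (li i) | Z.of_nat (p j) * w i - (if i == j then 1 else 0))) /\
    (forall (n : 'I_m -> Z) (J : Z), (forall j, (Z.of_nat (li j) | n j - w j * J)) ->
        (Z.of_nat q | \big[Z.add/0]_(j < m) (n j * Z.of_nat (p j)) - J)).
Proof.
  move=> Hq Hli [phi [H1 [H2 [H3 [H4 H5]]]]].
  have HL : forall i, 0 < Z.of_nat (li i).
  { move=> i. have := Hli i. move/ltP. lia. }
  have Hq0 : 0 < Z.of_nat q by move/leP: Hq; lia.
  have D2 : forall a b i, (Z.of_nat (li i) | phi (a + b) i - (phi a i + phi b i)).
  { move=> a b i. by apply/zcong_div; last apply H2. }
  have D0 : forall i, (Z.of_nat (li i) | phi 0 i - 0).
  { move=> i. have [k E] := D2 0 0 i. exists (- k). simpl in E. lia. }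
  have Dneg : forall a i, (Z.of_nat (li i) | phi (- a) i - - phi a i).
  { move=> a i. have [k E] := D2 a (- a) i. have [k0 E0] := D0 i.
    rewrite Z.add_opp_diag_r in E. exists (k0 - k). lia. }
  have Dnat : forall (k : nat) a i, (Z.of_nat (li i) | phi (Z.of_nat k * a) i - Z.of_nat k * phi a i).
  { move=> k a i. elim: k => [|k IH].
    - simpl. exact: D0.
    - have -> : Z.of_nat k.+1 * a = Z.of_nat k * a + a by rewrite Nat2Z.inj_succ; ring.
      have [k1 E1] := D2 (Z.of_nat k * a) a i. case: IH => k2 E2.
      exists (k1 + k2). rewrite Nat2Z.inj_succ. lia. }
  have Dmul : forall k a i, (Z.of_nat (li i) | phi (k * a) i - k * phi a i).
  { move=> k a i. have [Hk|Hk] : 0 <= k \/ k < 0 by lia.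
    - have -> : k = Z.of_nat (Z.to_nat k) by lia. apply Dnat.
    - have -> : k = - Z.of_nat (Z.to_nat (- k)) by lia.
      have -> : - Z.of_nat (Z.to_nat (- k)) * a = - (Z.of_nat (Z.to_nat (- k)) * a) by ring.
      have [k1 E1] := Dneg (Z.of_nat (Z.to_nat (- k)) * a) i.
      have [k2 E2] := Dnat (Z.to_nat (- k)) a i. exists (k1 - k2). lia. }
  have Hu : forall i, exists k, (Z.of_nat (li i) | k * phi (Z.of_nat (p i)) i - 1).
  { move=> i. have [k Hk] := (H5 i).2 1. exists k. by apply/zcong_div. }
  pose u i := proj1_sig (constructive_indefinite_description _ (Hu i)).
  have Hu' : forall i, (Z.of_nat (li i) | u i * phi (Z.of_nat (p i)) i - 1).
  { move=> i. rewrite /u. by case: (constructive_indefinite_description _ _). }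
  pose c i := phi 1 i.
  pose w i := (c i * u i) mod Z.of_nat (li i).
  have Hwc : forall i, (Z.of_nat (li i) | w i - c i * u i).
  { move=> i. exists (- ((c i * u i) / Z.of_nat (li i))). rewrite /w.
    have := Z.div_mod (c i * u i) (Z.of_nat (li i)). have := HL i. lia. }
  have Hpc : forall j i, (Z.of_nat (li i) | phi (Z.of_nat (p j)) i - Z.of_nat (p j) * c i).
  { move=> j i. have := Dmul (Z.of_nat (p j)) 1 i. by rewrite Z.mul_1_r. }
  have Hqc : forall i, (Z.of_nat (li i) | Z.of_nat q * c i - 0).
  { move=> i. rewrite /c. have := Dmul (Z.of_nat q) 1 i. rewrite Z.mul_1_r => h.
    apply dv_sym in h. apply: (dv_trans h).
    have h1 : (Z.of_nat (li i) | phi (Z.of_nat q) i - phi 0 i).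
    { apply/zcong_div; first by apply HL. apply H1.
      rewrite /zcong Z_mod_same_full. by rewrite Zmod_0_l. }
    apply: (dv_trans h1). apply D0. }
  exists w. split; [|split; [|split]].
  - move=> i. rewrite /w. apply Z.mod_pos_bound. apply HL.
  - move=> i. apply/dv_0.
    have h := dv_mull (Z.of_nat q) (Hwc i). apply: (dv_trans h).
    have -> : Z.of_nat q * (c i * u i) = (Z.of_nat q * c i) * u i by ring.
    have -> : (0 = 0 * u i) by ring. by apply dv_mulr.
  - move=> i j. have h := dv_mull (Z.of_nat (p j)) (Hwc i). apply: (dv_trans h).
    have -> : Z.of_nat (p j) * (c i * u i) = (Z.of_nat (p j) * c i) * u i by ring.
    have h2 := dv_mulr (u i) (dv_sym (Hpc j i)). apply: (dv_trans h2).
    case: (eqVneq i j) => [<-|Nij].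
    + by rewrite Z.mul_comm.
    + have [h3 _] := H5 j. have h4 := h3 i (elimN eqP Nij). apply (zcong_div _ _ _ (HL i)) in h4.
      have -> : (0 = 0 * u i) by ring. by apply dv_mulr.
  - move=> n J Hn. apply/zcong_div => //. apply H3 => i. apply/zcong_div; first by apply HL.
    set g := fun a => phi a i.
    have Hs := phi_sum _ (index_enum 'I_m) (Z.of_nat (li i)) g (fun j => n j * Z.of_nat (p j))
                 (fun a b => D2 a b i) ((dv_0 _ _).2 (D0 i)).
    rewrite /g in Hs. apply: (dv_trans Hs).
    have Hd := sumZ_delta _ (index_enum 'I_m) (Z.of_nat (li i)) (fun j => phi (n j * Z.of_nat (p j)) i) i (index_enum_uniq _).
    rewrite mem_index_enum in Hd.
    apply: (dv_trans (Hd _)).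
    + move=> j Nji. apply/dv_0. have h := Dmul (n j) (Z.of_nat (p j)) i. apply: (dv_trans h).
      have [h3 _] := H5 j. have h4 := h3 i (fun E => Nji (esym E)). apply (zcong_div _ _ _ (HL i)) in h4.
      have -> : (0 = n j * 0) by ring. by apply dv_mull.
    +
      have h := Dmul (n i) (Z.of_nat (p i)) i. apply: (dv_trans h).
      have h2 := dv_mulr (phi (Z.of_nat (p i)) i) (Hn i). apply: (dv_trans h2).
      have h3 := dv_mulr (J * phi (Z.of_nat (p i)) i) (Hwc i).
      have -> : w i * J * phi (Z.of_nat (p i)) i = w i * (J * phi (Z.of_nat (p i)) i) by ring.
      apply: (dv_trans h3).
      have h4 := dv_mull (c i * J) (Hu' i).
      have -> : c i * u i * (J * phi (Z.of_nat (p i)) i) = c i * J * (u i * phi (Z.of_nat (p i)) i) by ring.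
      apply: (dv_trans h4). rewrite Z.mul_1_r.
      have h5 := Dmul J 1 i. rewrite Z.mul_1_r in h5. apply dv_sym in h5.
      rewrite Z.mul_comm. exact h5.
Qed.

End ZPart.
Import ZPart.

Lemma INR_Z n : INR n = IZR (Z.of_nat n).
Proof. apply INR_IZR_INZ. Qed.

Lemma cdist_toC1 r y : cdist (toC r) y = dZ (r - cv y).
Proof.
  rewrite cdist_dZ. have [k E] := toC_val r. rewrite E.
  have -> : r + IZR k - cv y = (r - cv y) + IZR k by ring. apply dZ_shift.
Qed.

Lemma cdist_ge0 z z' : 0 <= cdist z z'.
Proof. rewrite cdist_dZ. apply dZ_ge0. Qed.

Lemma cdist_sym z z' : cdist z z' = cdist z' z.
Proof. rewrite !cdist_dZ -dZ_opp. f_equal. ring. Qed.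

Lemma cdist_tri z z' z'' : cdist z z'' <= cdist z z' + cdist z' z''.
Proof.
  rewrite !cdist_dZ. have -> : cv z - cv z'' = (cv z - cv z') + (cv z' - cv z'') by ring.
  apply dZ_add.
Qed.

Lemma cdist_0 z z' : cdist z z' = 0 -> z = z'.
Proof.
  rewrite /cdist => E. apply circle_eq. have h1 := val_in z. have h2 := val_in z'.
  rewrite /cv in h1 h2 *. move: E. rewrite /Rmin.
  set D := proj1_sig z - proj1_sig z'.
  have HD : Rabs D < 1 by rewrite /D; apply Rabs_def1; lra.
  destruct (Rle_dec _ _) as [H|H] => E.
  - have : D = 0. { case: (Rcase_abs D) => h; [rewrite Rabs_left in E|rewrite Rabs_right in E]; lra. }
    rewrite /D. lra.
  - lra.
Qed.

Lemma rmin_tri a b c : 0 <= a -> 0 <= b -> c <= a + b -> Rmin c 1 <= Rmin a 1 + Rmin b 1.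
Proof.
  move=> Ha Hb Hc. rewrite /Rmin.
  repeat destruct (Rle_dec _ _); lra.
Qed.

Lemma rmin_ge0 a : 0 <= a -> 0 <= Rmin a 1.
Proof. move=> h. rewrite /Rmin. destruct (Rle_dec _ _); lra. Qed.

Theorem lemmaA5 :
  forall (m : nat) (K : R), (1 <= m)%nat -> 0 < K ->
  exists C A : R, 0 < C /\
  forall (alpha : 'I_m -> R) (q : nat) (l : R)
         (p : 'I_m -> nat) (li : 'I_m -> nat),
    (forall i, 0 < alpha i < 1) ->
    (1 <= q)%nat -> 1 <= l -> INR q <= l ->
    (forall i, (1 <= p i)%nat /\ (p i <= q - 1)%nat) ->
    (forall i, Rabs (INR q * alpha i - INR (p i)) < K / l) ->
    (forall i, (0 < li i)%nat) ->
    cyclic_decomp m q li p ->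
    exists f : circle -> circle * ('I_m -> circle),
      quasi_isometry (warped_dist m alpha (INR q * l)) (prod_dist m l li)
                     C A f.
Proof.
  move=> m K Hm HK.
  have HM := Mr_ge0 m. set M := Mr m in HM *.
  exists (2 * (M + 2) * (1 + K)), M. split; first by nra.
  move=> alpha q l p li Halpha Hq Hl Hql Hp Hclose Hli Hdec.
  have [w [Hw0 [Hw1 [Hw2 Hw4]]]] := decomp_w _ _ _ _ Hq Hli Hdec.
  have Hq0 : 0 < INR q by apply lt_0_INR; apply/ltP.
  have HLpos : forall i, 0 < INR (li i) by move=> i; apply lt_0_INR; apply/ltP.
  have HwR : forall i, 0 <= IZR (w i) <= INR (li i).
  { move=> i. have [h1 h2] := Hw0 i. rewrite INR_Z. split; apply IZR_le; lia. }
  have HlqZ : forall i, (Z.of_nat (li i) <= Z.of_nat q)%Z.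
  { move=> i. apply Z.divide_pos_le; first by move/leP: Hq; lia.
    have [k1 E1] := Hw1 i. have [k2 E2] := Hw2 i i. rewrite eqxx in E2.
    exists (k1 * Z.of_nat (p i) - Z.of_nat q * k2)%Z.
    transitivity (Z.of_nat q * w i * Z.of_nat (p i) - Z.of_nat q * (Z.of_nat (p i) * w i - 1))%Z; first ring.
    rewrite E1 E2. ring. }
  have HlqR : forall i, INR (li i) <= INR q.
  { move=> i. rewrite !INR_Z. apply IZR_le, HlqZ. }
  have HdivR : forall i, exists k, INR q * IZR (w i) / INR (li i) = IZR k.
  { move=> i. have [k E] := Hw1 i. exists k.
    have : IZR (Z.of_nat q * w i) = IZR (k * Z.of_nat (li i)) by rewrite E.
    rewrite !mult_IZR -!INR_Z => E'. rewrite E'. field. have := HLpos i. lra. }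
  have Hpw : forall j i, exists k d, 0 <= IZR d <= 1 /\
        INR (p j) * IZR (w i) = IZR d + IZR k * INR (li i).
  { move=> j i. have [k E] := Hw2 i j. exists k, (if i == j then 1 else 0)%Z. split.
    - case: (i == j); simpl; lra.
    - have : IZR (Z.of_nat (p j) * w i) = IZR ((if i == j then 1 else 0) + k * Z.of_nat (li i))%Z.
      { f_equal. lia. }
      by rewrite mult_IZR plus_IZR mult_IZR -!INR_Z. }
  have Hl0 : 0 < l by lra.
  set t := INR q * l.
  have Ht : 0 < t by rewrite /t; nra.
  pose P := Pf m q l li w.
  have HP0 : forall D, 0 <= P D by move=> D; apply Pf_ge0; lra.
  have HPlip : forall D, P D <= (M + 1) * t * dZ D.
  { move=> D. by apply Pf_lipdZ. }
  have HPjump : forall j, P (alpha j) <= (M + 1) * (1 + K).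
  { move=> j. apply (Pf_jump m q l li w (alpha j) (p j) K) => //. }
  pose f := fun z : circle =>
    (toC (INR q * cv z), fun i => toC (INR q * IZR (w i) * cv z / INR (li i))).
  have Hf : forall z z', prod_dist m l li (f z) (f z') = P (cv z - cv z').
  { move=> z z'. rewrite /prod_dist /f /P /Pf /=. rewrite cdist_toC.
    have -> : INR q * cv z - INR q * cv z' = INR q * (cv z - cv z') by ring.
    f_equal. apply eq_bigr => i _. rewrite cdist_toC. f_equal. f_equal.
    field. have := HLpos i. lra. }
  set c := / (2 * (M + 1) * (1 + K)).
  have Hc : 0 < c by rewrite /c; apply Rinv_0_lt_compat; nra.
  have Hc1 : c * (M + 1) <= / 2.
  { have -> : c * (M + 1) = / 2 * / (1 + K) by rewrite /c; field; lra.
    have : / (1 + K) <= 1. { rewrite -Rinv_1. apply Rinv_le_contravar; lra. }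
    move=> h. nra. }
  have Hc2 : c * ((M + 1) * (1 + K)) = / 2 by rewrite /c; field; lra.
  pose d0 := fun z z' : circle => c * P (cv z - cv z') + / 2 * Rmin (t * cdist z z') 1.
  have Had0 : warp_admissible m alpha t d0.
  { split; [split; [|split; [|split]]|split].
    - move=> z z'. rewrite /d0. have := HP0 (cv z - cv z').
      have := rmin_ge0 (t * cdist z z'). have := cdist_ge0 z z'. move=> h1 h2 h3.
      have := h2 ltac:(nra). nra.
    - move=> z z'. split.
      + rewrite /d0 => E. apply cdist_0.
        have h1 := HP0 (cv z - cv z'). have h2 := cdist_ge0 z z'.
        have h3 := rmin_ge0 (t * cdist z z') ltac:(nra).
        have h4 : Rmin (t * cdist z z') 1 = 0 by nra.
        move: h4. rewrite /Rmin. destruct (Rle_dec _ _) => h4; [nra|lra].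
      + move=> <-. rewrite /d0. rewrite cdist_dZ Rminus_eq_0.
        have dZ0 : dZ 0 = 0 by apply (dZ_int 0%Z).
        have -> : P 0 = 0.
        { apply Rle_antisym; last by apply HP0. have := HPlip 0.
          rewrite dZ0. nra. }
        rewrite dZ0 Rmult_0_r /Rmin.
        destruct (Rle_dec _ _); lra.
    - move=> z z'. rewrite /d0 cdist_sym. have -> : cv z - cv z' = - (cv z' - cv z) by ring.
      by rewrite /P Pf_opp.
    - move=> z z' z''. rewrite /d0.
      have h1 : P (cv z - cv z'') <= P (cv z - cv z') + P (cv z' - cv z'').
      { have -> : cv z - cv z'' = (cv z - cv z') + (cv z' - cv z'') by ring.
        apply Pf_add; lra. }
      have h2 : Rmin (t * cdist z z'') 1 <= Rmin (t * cdist z z') 1 + Rmin (t * cdist z' z'') 1.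
      { apply rmin_tri; try (apply Rmult_le_pos; [lra|apply cdist_ge0]).
        have := cdist_tri z z' z''. nra. }
      nra.
    - move=> z z'. rewrite /d0. have h1 := HPlip (cv z - cv z'). rewrite -cdist_dZ in h1.
      have h2 := cdist_ge0 z z'.
      have h3 : Rmin (t * cdist z z') 1 <= t * cdist z z' by apply Rmin_l.
      have h4 : c * P (cv z - cv z') <= c * ((M + 1) * t * cdist z z') by apply Rmult_le_compat_l; lra.
      have h5 : c * ((M + 1) * t * cdist z z') <= / 2 * (t * cdist z z').
      { have -> : c * ((M + 1) * t * cdist z z') = (c * (M + 1)) * (t * cdist z z') by ring.
        apply Rmult_le_compat_r; [nra|lra]. }
      lra.
    - move=> z j. rewrite /d0. have hj := HPjump j. rewrite /P in hj.
      have hm : forall r, Rmin r 1 <= 1 by move=> r; apply Rmin_r.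
      split.
      + have [k E] := toC_val (cv z + alpha j).
        have -> : cv z - cv (cadd z (alpha j)) = - (alpha j) + IZR (- k).
        { rewrite /cadd -/(toC _) E opp_IZR. ring. }
        rewrite /P Pf_shift // Pf_opp. have := hm (t * cdist z (cadd z (alpha j))).
        have : c * Pf m q l li w (alpha j) <= c * ((M + 1) * (1 + K)) by apply Rmult_le_compat_l; lra.
        lra.
      + have [k E] := toC_val (cv z + - alpha j).
        have -> : cv z - cv (cadd z (- alpha j)) = alpha j + IZR (- k).
        { rewrite /cadd -/(toC _) E opp_IZR. ring. }
        rewrite /P Pf_shift //. have := hm (t * cdist z (cadd z (- alpha j))).
        have : c * Pf m q l li w (alpha j) <= c * ((M + 1) * (1 + K)) by apply Rmult_le_compat_l; lra.
        lra. }

  have Hup : forall z z' d, warp_admissible m alpha t d ->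
      d z z' <= (M + 2) * (1 + K) * P (cv z - cv z').
  { move=> z z' d Hd.
    set D := cv z' - cv z.
    have -> : cv z - cv z' = - D by rewrite /D; ring.
    rewrite /P Pf_opp /Pf.
    set J := near (INR q * D).
    set a := INR q * D - IZR J.
    have Ha : dZ (INR q * D) = Rabs a by [].
    rewrite Ha.
    pose n := fun j => (w j * J - near (IZR (w j * J) / INR (li j)) * Z.of_nat (li j))%Z.
    have Hn : forall j, (Z.of_nat (li j) | n j - w j * J)%Z.
    { move=> j. exists (- near (IZR (w j * J) / INR (li j)))%Z. rewrite /n. ring. }
    have [R HR] := Hw4 n J Hn.
    have Hnabs : forall j, Rabs (IZR (n j)) <=
        INR (li j) * dZ (INR q * IZR (w j) * D / INR (li j)) + l * Rabs a * 1.
    { move=> j. have HL := HLpos j.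
      have E : IZR (n j) = INR (li j) * (IZR (w j * J) / INR (li j) -
                             IZR (near (IZR (w j * J) / INR (li j)))).
      { rewrite /n minus_IZR !mult_IZR -INR_Z. field. lra. }
      rewrite E Rabs_mult (Rabs_right (INR (li j))); last lra.
      rewrite -/(dZ (IZR (w j * J) / INR (li j))).
      have -> : IZR (w j * J) / INR (li j) =
                INR q * IZR (w j) * D / INR (li j) + (- (IZR (w j) * a)) / INR (li j).
      { rewrite mult_IZR /a. field. lra. }
      have h1 := dZ_add (INR q * IZR (w j) * D / INR (li j)) (- (IZR (w j) * a) / INR (li j)).
      have h2 := L_dZ _ (- (IZR (w j) * a)) HL.
      rewrite Rabs_Ropp Rabs_mult (Rabs_right (IZR (w j))) in h2; last by have := HwR j; lra.
      have h3 : IZR (w j) * Rabs a <= l * Rabs a.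
      { apply Rmult_le_compat_r; first by apply Rabs_pos. have := HwR j. have := HlqR j. lra. }
      have h4 := dZ_ge0 (- (IZR (w j) * a) / INR (li j)).
      nra. }
    have Hch := chain _ _ _ _ Hd n (index_enum 'I_m) z z'.
    set Sn := \big[Rplus/0]_(j <- index_enum 'I_m) Rabs (IZR (n j)) in Hch.
    set T := \big[Rplus/0]_(i < m) (INR (li i) * dZ (INR q * IZR (w i) * D / INR (li i))).
    have HS : Sn <= T + M * (l * Rabs a).
    { apply Rle_trans with (\big[Rplus/0]_(i < m) (INR (li i) * dZ (INR q * IZR (w i) * D / INR (li i)) + l * Rabs a * 1)).
      - by apply sumR_le.
      - rewrite sumO_plus sumO_scal. rewrite /T /M /Mr. right. ring. }
    pose eps := fun j => alpha j - INR (p j) / INR q.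
    have Esum : \big[Rplus/0]_(j <- index_enum 'I_m) (IZR (n j) * alpha j) =
       IZR (\big[Z.add/0%Z]_(j < m) (n j * Z.of_nat (p j))%Z) / INR q +
       \big[Rplus/0]_(j <- index_enum 'I_m) (IZR (n j) * eps j).
    { rewrite IZR_sum /Rdiv Rmult_comm -sumR_scal -sumR_plus. apply eq_bigr => j _.
      rewrite mult_IZR -INR_Z /eps. field. lra. }
    have HZ : IZR (\big[Z.add/0%Z]_(j < m) (n j * Z.of_nat (p j))%Z) = IZR J + IZR R * INR q.
    { rewrite INR_Z -mult_IZR -plus_IZR. f_equal. lia. }
    rewrite Esum HZ in Hch.
    set E := \big[Rplus/0]_(j <- index_enum 'I_m) (IZR (n j) * eps j) in Hch.
    have EE : cv z' - cv z - ((IZR J + IZR R * INR q) / INR q + E) = (a / INR q - E) - IZR R.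
    { rewrite /a -/D. field. lra. } rewrite EE in Hch.
    rewrite dZ_sub_int in Hch.
    have HE : t * Rabs E <= K * Sn.
    { rewrite /E /Sn. apply Rle_trans with (t * \big[Rplus/0]_(j <- index_enum 'I_m) Rabs (IZR (n j) * eps j)).
      { apply Rmult_le_compat_l; [lra|apply sumR_abs]. }
      rewrite -sumR_scal -sumR_scal. apply sumR_le => j.
      rewrite Rabs_mult.
      have : t * Rabs (eps j) <= K.
      { have -> : t * Rabs (eps j) = l * Rabs (INR q * alpha j - INR (p j)).
        { rewrite /t /eps.
          have -> : INR q * alpha j - INR (p j) = INR q * (alpha j - INR (p j) / INR q) by field; lra.
          rewrite Rabs_mult (Rabs_right (INR q)); [ring|lra]. }
        have := Hclose j. move=> h.
        apply Rle_trans with (l * (K / l)); first by apply Rmult_le_compat_l; lra.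
        right. field. lra. }
      have := Rabs_pos (IZR (n j)). have := Rabs_pos (eps j). nra. }
    have Hdz : t * dZ (a / INR q - E) <= l * Rabs a + t * Rabs E.
    { apply Rle_trans with (t * (Rabs (a / INR q) + Rabs E)).
      - apply Rmult_le_compat_l; first lra.
        apply Rle_trans with (Rabs (a / INR q - E)); first by apply dZ_abs.
        rewrite /Rminus. have := Rabs_triang (a / INR q) (- E). by rewrite Rabs_Ropp.
      - rewrite Rabs_div; last lra. rewrite (Rabs_right (INR q)); last lra.
        right. rewrite /t. field. lra. }
    have HT : 0 <= T by apply sumR_ge0 => i; apply Rmult_le_pos; [apply pos_INR|apply dZ_ge0].
    have Hla : 0 <= l * Rabs a by apply Rmult_le_pos; [lra|apply Rabs_pos].
    have HSn : 0 <= Sn by apply sumR_ge0 => j; apply Rabs_pos.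
    have h1 : K * Sn <= K * (T + M * (l * Rabs a)) by apply Rmult_le_compat_l; lra.
    have h2 : 0 <= M * T by apply Rmult_le_pos; lra.
    have h3 : 0 <= K * T by apply Rmult_le_pos; lra.
    have h4 : 0 <= M * K * T by apply Rmult_le_pos; [apply Rmult_le_pos|]; lra.
    have h5 : 0 <= M * (l * Rabs a) by apply Rmult_le_pos; lra.
    have h6 : 0 <= K * (l * Rabs a) by apply Rmult_le_pos; lra.
    have h7 : 0 <= M * K * (l * Rabs a) by apply Rmult_le_pos; [apply Rmult_le_pos|]; lra.
    lra. }
  exists f. split.
  - move=> z z'. rewrite Hf.
    have [Hlo Hhi] := warped_bounds m alpha t z z' d0 ((M + 2) * (1 + K) * P (cv z - cv z'))
                       Had0 (fun d Hd => Hup z z' d Hd).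
    rewrite -/t. set dw := warped_dist m alpha t z z' in Hlo Hhi *.
    have HPz := HP0 (cv z - cv z').
    have Hd0 : c * P (cv z - cv z') <= d0 z z'.
    { rewrite /d0. have := rmin_ge0 (t * cdist z z'). have := cdist_ge0 z z'. move=> h1 h2.
      have := h2 ltac:(nra). lra. }
    split.
    + have : / (2 * (M + 2) * (1 + K)) * dw <= / 2 * P (cv z - cv z').
      { apply Rle_trans with (/ (2 * (M + 2) * (1 + K)) * ((M + 2) * (1 + K) * P (cv z - cv z'))).
        - apply Rmult_le_compat_l => //. apply Rlt_le, Rinv_0_lt_compat. nra.
        - right. field. lra. }
      lra.
    + have -> : P (cv z - cv z') = (2 * (M + 1) * (1 + K)) * (c * P (cv z - cv z')).
      { rewrite /c. field. lra. }
      have : 2 * (M + 1) * (1 + K) * (c * P (cv z - cv z')) <= 2 * (M + 1) * (1 + K) * dw.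
      { apply Rmult_le_compat_l; [nra|lra]. }
      have : 0 <= c * P (cv z - cv z') by apply Rmult_le_pos; lra.
      nra.
  - case=> y0 ys.
    pose k := fun i => near (INR (li i) * cv (ys i) - IZR (w i) * cv y0).
    pose J := \big[Z.add/0%Z]_(j < m) (k j * Z.of_nat (p j))%Z.
    have HJ : forall i, (Z.of_nat (li i) | w i * J - k i)%Z.
    { move=> i. rewrite /J sumZ_mull.
      have Hd := sumZ_delta _ (index_enum 'I_m) (Z.of_nat (li i))
                   (fun j => w i * (k j * Z.of_nat (p j)))%Z i (index_enum_uniq _).
      rewrite mem_index_enum in Hd. apply: (dv_trans (Hd _)).
      + move=> j Nji. have [kk E] := Hw2 i j.
        have Nij : (i == j) = false. { apply/eqP => E'. by apply Nji. }
        rewrite Nij in E. exists (kk * k j)%Z.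
        transitivity (k j * (Z.of_nat (p j) * w i - 0))%Z; first ring. rewrite E. ring.
      + have [kk E] := Hw2 i i. rewrite eqxx in E. exists (kk * k i)%Z.
        transitivity (k i * (Z.of_nat (p i) * w i - 1))%Z; first ring. rewrite E. ring. }
    set r0 := (cv y0 + IZR J) / INR q.
    exists (toC r0).
    have [k0 E0] := toC_val r0.
    rewrite /prod_dist /f. cbn [fst snd]. rewrite !cdist_toC1 E0.
    have -> : INR q * (r0 + IZR k0) - cv y0 = IZR (J + Z.of_nat q * k0).
    { rewrite plus_IZR mult_IZR -INR_Z /r0. field. lra. }
    rewrite dZ_int Rmult_0_r Rplus_0_l.
    apply Rle_trans with (\big[Rplus/0]_(i < m) (/ 2 * 1)).
    + apply sumR_le => i. rewrite cdist_toC1. have HL := HLpos i.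
      have [kk Ekk] := HdivR i. have [rr Err] := HJ i.
      set v := INR (li i) * cv (ys i) - IZR (w i) * cv y0.
      have e1 : IZR (w i) * IZR J - IZR (k i) - IZR rr * INR (li i) = 0.
      { rewrite -mult_IZR INR_Z -mult_IZR -!minus_IZR Err. rewrite minus_IZR. ring. }
      have e2 : INR q * IZR (w i) - IZR kk * INR (li i) = 0.
      { rewrite -Ekk. field. lra. }
      have -> : INR q * IZR (w i) * (r0 + IZR k0) / INR (li i) - cv (ys i) =
          (IZR (k i) - v) / INR (li i) + IZR (rr + kk * k0) +
          (IZR (w i) * IZR J - IZR (k i) - IZR rr * INR (li i)) / INR (li i) +
          (INR q * IZR (w i) - IZR kk * INR (li i)) * IZR k0 / INR (li i).
      { rewrite plus_IZR mult_IZR /v /r0. field. lra. }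
      rewrite e1 e2 /Rdiv !Rmult_0_l !Rplus_0_r -/(Rdiv _ _) dZ_shift.
      apply Rle_trans with (Rabs (IZR (k i) - v)); first by apply L_dZ.
      rewrite Rabs_minus_sym -/(dZ v). have := dZ_half v. lra.
    + rewrite sumO_scal -/(Mr m) -/M. lra.
Qed.
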